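(* Let $f,g\in\mathbb L^2([0,1])$ with $\Delta=\|f-g\|>0$, let $X$ be distributed according to the model below, and set $\delta=\dfrac{e^{-(1+\Delta/2)^2/2}}{2\sqrt{2\pi}}$. Then for all $\epsilon\le\frac14\wedge\Delta$, \[ \mathbb P\Big(\delta\epsilon\le\big|\eta(X)-\tfrac12\big|\le\epsilon\Big)\ge\delta\frac\epsilon\Delta. \]
   Context: Model: $Y\sim\mathrm{Bernoulli}(1/2)$ independent of a standard Brownian motion $W$ on $[0,1]$, and $dX(t)=Yf(t)\,dt+(1-Y)g(t)\,dt+dW(t)$. Regression function $\eta(X)=\mathbb P(Y=1\mid X)=\dfrac{\exp(\int_0^1(f-g)\,dX-\frac12\|f\|^2+\frac12\|g\|^2)}{1+\exp(\int_0^1(f-g)\,dX-\frac12\|f\|^2+\frac12\|g\|^2)}$. $\|\cdot\|$ is the $\mathbb L^2([0,1])$ norm; $a\wedge b=\min\{a,b\}$. *)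

(* Defs.v *)
From HB Require Import structures.
From mathcomp Require Import all_boot all_order all_algebra.
From mathcomp Require Import all_classical all_reals all_analysis.
Set Implicit Arguments. Unset Strict Implicit. Unset Printing Implicit Defensive.
Import Order.TTheory GRing.Theory Num.Theory.
Local Open Scope classical_set_scope.
Local Open Scope ring_scope.

Definition I01 {R : realType} : set R := `[0%R, 1%R].

Definition L2_01 {R : realType} (f : R -> R) : Prop :=
  measurable_fun I01 f /\
  (@lebesgue_measure R).-integrable I01 (fun x => (f x ^+ 2)%:E).

Definition inner01 {R : realType} (f g : R -> R) : R :=
  Rintegral (@lebesgue_measure R) I01 (fun x => f x * g x).

Definition norm01 {R : realType} (f : R -> R) : R := Num.sqrt (inner01 f f).

Definition indep_bool_real {d} {T : measurableType d} {R : realType}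
    (P : probability T R) (Y : T -> bool) (Z : T -> R) : Prop :=
  forall (A : set bool) (B : set R), measurable A -> measurable B ->
    P (Y @^-1` A `&` Z @^-1` B) = (P (Y @^-1` A) * P (Z @^-1` B))%E.

(* Observation functional of the model dX = Y f dt + (1-Y) g dt + dW:
   int_0^1 h dX = Y <h,f> + (1-Y) <h,g> + int_0^1 h dW ; here xi(w) stands
   for the Wiener integral int_0^1 (f-g) dW evaluated at w. *)
Definition int_fg_dX {R : realType} {T : Type} (f g : R -> R)
    (Y : T -> bool) (xi : T -> R) (w : T) : R :=
  (if Y w then inner01 (f \- g) f else inner01 (f \- g) g) + xi w.

(* regression function eta(X) = P(Y = 1 | X) *)
Definition eta_X {R : realType} {T : Type} (f g : R -> R)
    (Y : T -> bool) (xi : T -> R) (w : T) : R :=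
  let z := int_fg_dX f g Y xi w - (norm01 f) ^+ 2 / 2 + (norm01 g) ^+ 2 / 2 in
  expR z / (1 + expR z).

(* Main.v *)
Require Import Defs.
From HB Require Import structures.
From mathcomp Require Import all_boot all_order all_algebra.
From mathcomp Require Import all_classical all_reals all_analysis.
From mathcomp Require Import ring lra measurable_realfun.
Import Order.TTheory GRing.Theory Num.Theory.
Import numFieldNormedType.Exports.
Local Open Scope classical_set_scope.
Local Open Scope ring_scope.



Lemma exp_step {R : realType} (c : R) : (forall y : R, 0 <= y -> 1 + y + c * y^+2 <= expR y) ->
  0 <= c ->
  forall y : R, 0 <= y -> 1 + y + (1 + 2 * c) / 4 * y^+2 <= expR y.
Proof.
move=> H c0 y y0.
have -> : expR y = expR (y/2) * expR (y/2) by rewrite -expRD; congr expR; field.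
have h := H (y/2) ltac:(lra).
have h0 : 0 <= 1 + y/2 + c * (y/2)^+2 by rewrite addr_ge0 // ?mulr_ge0 // ?sqr_ge0; lra.
apply: le_trans (ler_pM h0 h0 h h).
have e : (1 + y / 2 + c * (y / 2) ^+ 2) * (1 + y / 2 + c * (y / 2) ^+ 2) - (1 + y + (1 + 2 * c) / 4 * y ^+ 2) = c * y^+3 / 4 + c^+2 * y^+4/16 by field.
rewrite -subr_ge0 e addr_ge0 // ?divr_ge0 // ?mulr_ge0 // ?exprn_ge0 //.
Qed.
Lemma exp_ge2 {R : realType} (y : R) : 0 <= y -> 1 + y + 31/64 * y^+2 <= expR y.
Proof.
have H0 : forall y : R, 0 <= y -> 1 + y + 0 * y^+2 <= expR y.
  by move=> z _; rewrite mul0r addr0 expR_ge1Dx.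
have H1 := exp_step 0 H0 (lexx 0).
have H2 := exp_step _ H1 ltac:(lra).
have H3 := exp_step _ H2 ltac:(lra).
have H4 := exp_step _ H3 ltac:(lra).
have H5 := exp_step _ H4 ltac:(lra).
move=> y0; apply: le_trans (H5 y y0); lra.
Qed.

Lemma cos_3120_gt0 {R : realType} : 0 < cos (31/20 : R).
Proof.
set x : R := 31/20.
have h := @cvg_cos_coeff' R x; rewrite -(cvg_lim (@Rhausdorff R) h).
apply: (@lt_trans _ _ (\sum_(0 <= i < 4) cos_coeff' x i)).
  rewrite !big_nat_recr//= big_nil add0r /cos_coeff'.
  rewrite /x -!exprnP /= !factS fact0 /=.
  rewrite !(exprS, expr0, mulr1, mulN1r, mulNr, mul1r, opprK).
  rewrite !natrM; lra.
apply: lt_sum_lim_series; [by move/cvgP in h|move=> d].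
rewrite /cos_coeff' addnS.
set k := (4 + d.*2)%N.
have sk : (-1) ^ k = 1 :> R by rewrite -exprnP -signr_odd /k oddD odd_double.
have sk1 : (-1) ^ k.+1 = -1 :> R by rewrite -exprnP -signr_odd /= /k oddD odd_double.
rewrite sk sk1 doubleS mul1r mulN1r !mulNr.
set m := k.*2.
have m8 : (8 <= m)%N by rewrite /m /k doubleD.
clearbody m.
rewrite !factS !natrM exprS exprS.
have fp : 0 < (m`!)%:R :> R by rewrite ltr0n fact_gt0.
have xp : 0 < x by rewrite /x; lra.
have A0 : 0 < x^+m / (m`!)%:R by rewrite divr_gt0 // exprn_gt0.
have m8r : 8 <= m%:R :> R by rewrite (ler_nat R 8 m).
have e : x * (x * x ^+ m) / ((m.+2)%:R * ((m.+1)%:R * (m`!)%:R)) = (x^+m / (m`!)%:R) * (x * x / ((m.+2)%:R * (m.+1)%:R)).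
  field; apply/and3P; split; rewrite gt_eqF //; lra.

rewrite e -{1}(mulr1 (x ^+ m / _)) -mulrBr mulr_gt0 // subr_gt0.
rewrite ltr_pdivrMr ?mul1r; last by rewrite mulr_gt0 ?ltr0n.
rewrite -natrM; apply: (@lt_le_trans _ _ (90%:R)); first by rewrite /x; lra.
by rewrite ler_nat (@leq_mul 10 9).
Qed.
Lemma pi_gt31 {R : realType} : 31/10 < (pi : R).
Proof.
rewrite ltNge; apply/negP => H.
have h1 : pi / 2 <= 31/20 :> R by lra.
have h2 : (31/20 : R) <= pi by have := @pi_ge2 R; lra.
move: h1; rewrite le_eqVlt => /orP[/eqP e|lt].
  by have := @cos_3120_gt0 R; rewrite -e cos_pihalf ltxx.
have := @ltr_cos R (pi/2) (31/20).
have p2 := @pi_ge2 R.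
have i1 : (31/20 : R) \in `[0, pi] by rewrite in_itv /=; apply/andP; split; lra.
have i2 : (pi/2 : R) \in `[0, pi] by rewrite in_itv /=; apply/andP; split; lra.
move=> /(_ i2 i1); rewrite lt cos_pihalf => c.
by have := @cos_3120_gt0 R; rewrite ltNge (ltW c).
Qed.


Lemma delta_le {R : realType} (D : R) : 0 <= D ->
  expR (- (1 + D / 2) ^+ 2 / 2) / (2 * Num.sqrt (2 * pi)) <= 31/250.
Proof.
move=> D0.
have e1 : expR (- (1 + D / 2) ^+ 2 / 2) <= expR (- (1/2)).
  by rewrite ler_expR; nra.
have a0 := @exp_ge2 _ (1/4) ltac:(lra).
have e2 : expR (1/2) = expR (1/4) * expR (1/4) :> R by rewrite -expRD; congr expR; lra.
have a1 : (32/25)^+2 <= expR (1/2) :> R.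
  rewrite e2 expr2; apply: ler_pM; try lra.
have p := @pi_gt31 R.
have s1 : 62/25 <= Num.sqrt (2 * pi) :> R.
  have -> : 62/25 = Num.sqrt ((62/25)^+2) :> R by rewrite sqrtr_sqr ger0_norm //; lra.
  rewrite ler_sqrt; last by have := @pi_ge2 R; lra.
  lra.
have uE := expRxMexpNx_1 (1/2 : R).
have ep := expR_gt0 (1/2 : R).
have up := expR_gt0 (- (1/2) : R).
have Es : 1 <= expR (1/2) * Num.sqrt (2 * pi) * (31/125) :> R.
  have h0 : 0 <= (32/25)^+2 :> R by rewrite sqr_ge0.
  have h1 : 0 <= 62/25 :> R by lra.
  have sp : 0 < Num.sqrt (2 * pi) :> R by lra.
  have q1 := ler_wpM2r (ltW sp) a1.
  have q2 := ler_wpM2l h0 s1.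
  lra.
rewrite ler_pdivrMr; last by lra.
apply: (le_trans e1).
apply: (@le_trans _ _ (expR (- (1/2)) * (expR (1/2) * Num.sqrt (2 * pi) * (31/125)))).
  by rewrite ler_peMr // ltW.
rewrite !mulrA (mulrC (expR (- (1/2)))) uE; lra.
Qed.


Lemma sig_pos {R : realType} (eps t dl : R) : 0 < eps <= 1/4 -> 0 < dl <= 31/250 ->
  eps/2 <= t <= eps ->
  dl * eps <= `| expR t / (1 + expR t) - 1/2 | <= eps.
Proof.
move=> /andP[e0 e1] /andP[d0 d1] /andP[t0 t1].
set v := expR t.
have vp : 0 < v := expR_gt0 t.
have L := @exp_ge2 _ (eps/2) ltac:(lra).
have vL : expR (eps/2) <= v by rewrite /v ler_expR.
have vinv : v * expR (- t) = 1 by rewrite /v expRxMexpNx_1.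
have en := expR_ge1Dx (- t).
have v1 : 1 <= v by rewrite /v -expR0 ler_expR; lra.
have -> : v / (1 + v) - 1/2 = (v - 1) / (2 * (1 + v)) by field; lra.
rewrite ger0_norm; last by apply: divr_ge0; lra.
apply/andP; split.
  rewrite ler_pdivlMr; last by lra.
  have h1 : 0 <= (v - (1 + eps/2 + 31/64 * (eps/2)^+2)) * (1 - 2 * dl * eps).
    apply: mulr_ge0; [lra|nra].
  have h2 : 0 <= (31/125 - 2 * dl) * eps * (2 + eps/2 + 31/64 * (eps/2)^+2).
    apply: mulr_ge0; [apply: mulr_ge0; lra|]. 
    have := sqr_ge0 (eps/2); lra.
  have h3 : 0 <= eps * (eps * (1/4 - eps)) by apply: mulr_ge0; [lra|apply: mulr_ge0; lra].
  nra.
rewrite ler_pdivrMr; last by lra.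
have h : v * (1 - t) <= 1 by rewrite -vinv; apply: ler_wpM2l; lra.
nra.
Qed.



Lemma mI01 {R : realType} : measurable (I01 : set (measurableTypeR R)).
Proof. by rewrite /I01; exact: measurable_itv. Qed.

Lemma int_sq {R : realType} (f : R -> R) : L2_01 f -> (@lebesgue_measure R).-integrable I01 (EFin \o (fun x => f x * f x)).
Proof.
move=> [mf If]; apply: (eq_integrable mI01 _ _ _ If) => x _ /=; by rewrite expr2.
Qed.

Lemma int_prod {R : realType} (f g : R -> R) : L2_01 f -> L2_01 g ->
  (@lebesgue_measure R).-integrable I01 (EFin \o (fun x => f x * g x)).
Proof.
move=> Lf Lg.
have If := int_sq _ Lf; have Ig := int_sq _ Lg.
have Is := integrableD mI01 If Ig.
apply: (le_integrable mI01 _ _ Is).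
  by apply/measurable_EFinP; apply: measurable_funM; [exact: Lf.1|exact: Lg.1].
move=> x _ /=.
rewrite lee_fin (@ger0_norm _ (f x * f x + g x * g x)); last first.
  by rewrite addr_ge0 // -expr2 sqr_ge0.
rewrite ler_norml; apply/andP; split; nra.
Qed.

Lemma intB {R : realType} (a b : R -> R) : (@lebesgue_measure R).-integrable I01 (EFin \o a) -> (@lebesgue_measure R).-integrable I01 (EFin \o b) ->
  (@lebesgue_measure R).-integrable I01 (EFin \o (fun x => a x - b x)).
Proof.
move=> Ia Ib; apply: (eq_integrable mI01 _ _ _ (integrableB mI01 Ia Ib)) => x _ /=.
by rewrite EFinB.
Qed.

Lemma inner_key {R : realType} (f g : R -> R) : L2_01 f -> L2_01 g ->
  inner01 (f \- g) f - (norm01 f)^+2/2 + (norm01 g)^+2/2 = (norm01 (f \- g))^+2/2.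
Proof.
move=> Lf Lg.
have ff := int_sq _ Lf; have gg := int_sq _ Lg.
have fg := int_prod _ _ Lf Lg; have gf := int_prod _ _ Lg Lf.
have sq h : norm01 h ^+ 2 = inner01 h h.
  rewrite /norm01 sqr_sqrtr // /inner01 Rintegral_ge0 // => x _.
  by rewrite -expr2 sqr_ge0.
rewrite !sq /inner01.
have e1 : \int[@lebesgue_measure R]_(x in I01) ((f \- g) x * f x) =
   \int[@lebesgue_measure R]_(x in I01) (f x * f x) - \int[@lebesgue_measure R]_(x in I01) (g x * f x).
  rewrite -(RintegralB mI01 ff gf).
  by apply: eq_Rintegral => x _ /=; rewrite mulrBl.
have e2 : \int[@lebesgue_measure R]_(x in I01) ((f \- g) x * (f \- g) x) =
   (\int[@lebesgue_measure R]_(x in I01) (f x * f x) - \int[@lebesgue_measure R]_(x in I01) (g x * f x)) -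
   (\int[@lebesgue_measure R]_(x in I01) (f x * g x) - \int[@lebesgue_measure R]_(x in I01) (g x * g x)).
  rewrite -(RintegralB mI01 ff gf) -(RintegralB mI01 fg gg).
  rewrite -(RintegralB mI01 (intB _ _ ff gf) (intB _ _ fg gg)).
  by apply: eq_Rintegral => x _ /=; ring.
have e3 : \int[@lebesgue_measure R]_(x in I01) (f x * g x) = \int[@lebesgue_measure R]_(x in I01) (g x * f x).
  by apply: eq_Rintegral => x _; rewrite mulrC.
by rewrite e1 e2 e3; field.
Qed.

Lemma sig_neg (R : realType) (t : R) :
  `| expR t / (1 + expR t) - 1/2 | = `| expR (- t) / (1 + expR (- t)) - 1/2 |.
Proof.
rewrite expRN -normrN; congr `|_|.
have := expR_gt0 t => h.
field; lra.
Qed.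

Lemma sig_abs (R : realType) (eps z dl : R) : 0 < eps <= 1/4 -> 0 < dl <= 31/250 ->
  (eps/2 <= z <= eps) \/ (- eps <= z <= - (eps / 2)) ->
  dl * eps <= `| expR z / (1 + expR z) - 1/2 | <= eps.
Proof.
move=> he hd [hz|/andP[z1 z2]]; first exact: sig_pos.
rewrite sig_neg; apply: sig_pos => //; apply/andP; split; lra.
Qed.

Lemma continuous_sig (R : realType) : continuous (fun z : R => expR z / (1 + expR z)).
Proof.
move=> x; apply: cvgM; first exact: continuous_expR.
apply: cvgV; first by rewrite gt_eqF // addr_gt0 // expR_gt0.
apply: cvgD; first exact: cvg_cst.
exact: continuous_expR.
Qed.

Theorem proposition5 (R : realType) (f g : R -> R) (d : measure_display)
  (T : measurableType d) (P : probability T R) (Y : T -> bool) (xi : T -> R) :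
  L2_01 f -> L2_01 g ->
  0 < norm01 (f \- g) ->
  measurable_fun setT Y ->
  (forall A : set bool, measurable A ->
     P (Y @^-1` A) = bernoulli_prob (1 / 2 : R) A) ->
  measurable_fun setT xi ->
  (forall B : set R, measurable B ->
     P (xi @^-1` B) = normal_prob 0 (norm01 (f \- g)) B) ->
  indep_bool_real P Y xi ->
  let Delta := norm01 (f \- g) in
  let delta := expR (- (1 + Delta / 2) ^+ 2 / 2) / (2 * Num.sqrt (2 * pi)) in
  forall eps : R, eps <= Num.min (1 / 4) Delta ->
    ((delta * eps / Delta)%:E <=
     P [set w | (delta * eps <= `|eta_X f g Y xi w - 1 / 2| <= eps)%R])%E.
Proof.
move=> Lf Lg Dp mY HY mxi Hxi ind Delta delta eps Heps.
have D0 : 0 < Delta := Dp.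
have sp : 0 < Num.sqrt (2 * pi) :> R by rewrite sqrtr_gt0 mulr_gt0 // pi_gt0.
have dp : 0 < delta by rewrite /delta divr_gt0 // ?expR_gt0 // mulr_gt0.
have dle : delta <= 31/250 by apply: delta_le; exact: ltW.
set E := [set w | _].
have [e0|e0] := leP eps 0.
  apply: (@le_trans _ _ 0%E); last exact: measure_ge0.
  rewrite lee_fin; apply: mulr_le0_ge0; last by rewrite invr_ge0 ltW.
  by apply: mulr_ge0_le0 => //; exact: ltW.
move: Heps; rewrite le_min => /andP[e1 e2].
set c1 := inner01 (f \- g) f; set c2 := inner01 (f \- g) g.
set n1 := norm01 f ^+ 2 / 2; set n2 := norm01 g ^+ 2 / 2.
pose G := fun z : R => expR z / (1 + expR z).
pose zf := fun w => (if Y w then c1 else c2) + xi w - n1 + n2.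
have key : eta_X f g Y xi = G \o zf by [].
have meta : measurable_fun setT (eta_X f g Y xi).
  rewrite key; apply: measurableT_comp; first exact: (continuous_measurable_fun (continuous_sig R)).
  rewrite /zf; apply: measurable_funD; last exact: measurable_cst.
  apply: measurable_funB; last exact: measurable_cst.
  apply: measurable_funD; last exact: mxi.
  by apply: measurable_fun_ifT => //; exact: measurable_cst.
have mE : measurable E.
  have mh : measurable_fun setT (fun w => `|eta_X f g Y xi w - 1/2|).
    apply: measurableT_comp; first exact: normr_measurable.
    by apply: measurable_funB => //; exact: measurable_cst.
  have := mh measurableT `[delta * eps, eps]%classic (measurable_itv _).
  rewrite setTI; congr measurable; apply/seteqP; split => w; by rewrite /= in_itv.
set b := Delta ^+ 2 / 2.
pose B1 := `[eps/2 - b, eps - b]%classic.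
pose B2 := `[- eps - b, - (eps/2) - b]%classic.
have mB : measurable (B1 `|` B2) by apply: measurableU; exact: measurable_itv.
have mt : measurable [set true] by [].
pose S := Y @^-1` [set true] `&` xi @^-1` (B1 `|` B2).
have mS : measurable S.
  apply: measurableI.
    by have := mY measurableT _ mt; rewrite setTI.
  by have := mxi measurableT _ mB; rewrite setTI.
have kb : c1 - n1 + n2 = b by rewrite /c1 /n1 /n2 /b inner_key.
have SE : S `<=` E.
  move=> w [/= Yw xiw]; rewrite /E /= key /= /zf Yw.
  have -> : c1 + xi w - n1 + n2 = b + xi w by lra.
  apply: sig_abs; [lra | lra | ].
  by case: xiw; rewrite /B1 /B2 /= in_itv /= => /andP[h1 h2]; [left|right]; apply/andP; split; lra.
have PY : P (Y @^-1` [set true]) = (1/2)%:E.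
  rewrite HY // /bernoulli_prob ifT; last by apply/andP; split; lra.
  by rewrite fsbig_set1 /bernoulli_pmf.
have PS : P S = ((1/2)%:E * normal_prob 0 Delta (B1 `|` B2))%E by rewrite /S ind // PY Hxi.
have lebB : lebesgue_measure (B1 `|` B2) = eps%:E.
  rewrite measureU //; first last.
  - apply/seteqP; split => // x [] /=; rewrite /B1 /B2 /= !in_itv /= => /andP[h1 h2] /andP[h3 h4]; lra.
  - exact: measurable_itv.
  - exact: measurable_itv.
  have h1 : lebesgue_measure B1 = (eps/2)%:E.
    rewrite lebesgue_measure_itv /= ifT ?lte_fin; last lra.
    by rewrite -EFinB; congr EFin; lra.
  have h2 : lebesgue_measure B2 = (eps/2)%:E.
    rewrite lebesgue_measure_itv /= ifT ?lte_fin; last lra.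
    by rewrite -EFinB; congr EFin; lra.
  move: h1 h2 => /= -> ->.
  by rewrite -EFinD; congr EFin; lra.
have NB : ((2 * delta / Delta * eps)%:E <= normal_prob 0 Delta (B1 `|` B2))%E.
  rewrite /normal_prob.
  apply: (@le_trans _ _ (\int[lebesgue_measure]_(x in B1 `|` B2) (cst (2 * delta / Delta)%:E) x)%E).
    by rewrite integral_cst //; move: lebB => /= ->; rewrite -EFinM.
  apply: ge0_le_integral => //.
  - by move=> x _; rewrite lee_fin /= ltW // mulr_gt0 // ?invr_gt0 // mulr_gt0.
  - apply/measurable_EFinP; apply: (measurable_funS measurableT) => //.
    exact: measurable_normal_pdf.
  move=> x Bx; rewrite lee_fin normal_pdfE ?gt_eqF // /normal_peak /normal_fun /=.
  have xb : x ^+ 2 <= (Delta + b) ^+ 2.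
    have bp : 0 <= b by rewrite /b divr_ge0 // sqr_ge0.
    have [h1 h2] : - (Delta + b) <= x /\ x <= Delta + b.
      by case: Bx; rewrite /B1 /B2 /= in_itv /= => /andP[h1 h2]; split; lra.
    nra.
  have sq : Num.sqrt (Delta ^+ 2 * pi *+ 2) = Delta * Num.sqrt (2 * pi).
    rewrite (_ : Delta ^+ 2 * pi *+ 2 = Delta ^+ 2 * (2 * pi)); last by rewrite mulr2n; ring.
    by rewrite sqrtrM ?sqr_ge0 // sqrtr_sqr ger0_norm // ltW.
  have ex : expR (- (1 + Delta / 2) ^+ 2 / 2) <= expR (- (x - 0) ^+ 2 / (Delta ^+ 2 *+ 2)).
    rewrite ler_expR subr0 !mulNr lerN2.
    have Dq : 0 < Delta ^+ 2 *+ 2 by rewrite mulrn_wgt0 // exprn_gt0.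
    rewrite ler_pdivrMr //.
    have -> : (1 + Delta / 2) ^+ 2 / 2 * (Delta ^+ 2 *+ 2) = (Delta + b) ^+ 2.
      by rewrite /b mulr2n; field.
    exact: xb.
  rewrite sq /delta.
  have -> : 2 * (expR (- (1 + Delta / 2) ^+ 2 / 2) / (2 * Num.sqrt (2 * pi))) / Delta =
    (Delta * Num.sqrt (2 * pi))^-1 * expR (- (1 + Delta / 2) ^+ 2 / 2).
    by field; apply/andP; split; rewrite gt_eqF.
  apply: ler_wpM2l ex.
  by rewrite invr_ge0 ltW // mulr_gt0.
apply: (@le_trans _ _ ((1/2)%:E * (2 * delta / Delta * eps)%:E)%E).
  rewrite -EFinM lee_fin le_eqVlt; apply/orP; left; apply/eqP; field.
  by rewrite gt_eqF.
have PSE : (P S <= P E)%E by apply: le_measure => //; rewrite inE.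
apply: le_trans PSE.
rewrite PS; apply: lee_pmul => //.
by rewrite lee_fin ltW // mulr_gt0 // ?divr_gt0 // mulr_gt0.
Qed.
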